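(* Let $X$ be a Banach space and $f_k:X\to\mathbb{R}\cup\{+\infty\}$ $(k\in\mathbb{N})$ proper convex functions such that $f:=\sup_{k\in\mathbb{N}}f_k$ is proper. Let $f_\infty(x):=\limsup_{k\to\infty}f_k(x)$ $(x\in X)$. Then $$\inf_{x\in X} f(x)=\max\Big\{\inf_{x\in X}\Big(\overline{\sum_{k\in\mathbb{N}}}\lambda_kf_k(x)+\lambda_\infty f_\infty(x)\Big):\ (\lambda_1,\lambda_2,\ldots)\in\ell^1_+,\ \lambda_\infty\ge0,\ \sum_{k=1}^{\infty}\lambda_k+\lambda_\infty=1\Big\},$$ in particular the maximum is attained.
   Context: $\ell^1_+$ is the set of sequences in $\ell^1$ with nonnegative entries. For $x\in X$, $\overline{\sum_{k\in\mathbb{N}}}\lambda_kf_k(x):=\limsup_{n\to\infty}\sum_{k=1}^n\lambda_kf_k(x)$. Conventions: $0\cdot(+\infty)=+\infty$ and $(+\infty)-(+\infty)=+\infty$. *)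

(* Defs.v *)
From HB Require Import structures.
From mathcomp Require Import all_boot all_order all_algebra.
From mathcomp Require Import all_classical all_reals all_analysis.
Set Implicit Arguments. Unset Strict Implicit. Unset Printing Implicit Defensive.
Import Order.TTheory GRing.Theory Num.Theory.
Import numFieldNormedType.Exports.
Local Open Scope classical_set_scope.
Local Open Scope ring_scope.
Local Open Scope ereal_scope.

(* Multiplication of a nonnegative real scalar by an extended real, with the
   paper's convention 0 * (+oo) = +oo (otherwise the usual product). *)
Definition cmul {R : realType} (l : R) (a : \bar R) : \bar R :=
  if a == +oo then +oo else l%:E * a.

(* Addition with the paper's convention (+oo) + (-oo) = +oo. *)
Definition cadd {R : realType} (a b : \bar R) : \bar R :=
  if (a == +oo) || (b == +oo) then +oo else a + b.

Definition proper_fun {R : realType} {X : Type} (f : X -> \bar R) : Prop :=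
  (forall x, f x != -oo) /\ (exists x, f x != +oo).

Definition convex_fun {R : realType} {X : lmodType R} (f : X -> \bar R) : Prop :=
  forall (x y : X) (t : R), (0 < t < 1)%R ->
    f (t *: x + (1 - t) *: y)%R <= t%:E * f x + (1 - t)%:E * f y.

Definition admissible {R : realType} (l : nat -> R) (linf : R) : Prop :=
  (forall k, 0 <= l k)%R /\ cvgn (series l) /\ (0 <= linf)%R /\
  (limn (series l) + linf = 1)%R.

Definition weighted_value {R : realType} {X : Type} (f : nat -> X -> \bar R)
  (l : nat -> R) (linf : R) (x : X) : \bar R :=
  cadd (limn_esup (fun n => \sum_(0 <= k < n) cmul (l k) (f k x)))
       (cmul linf (limn_esup (fun k => f k x))).

(* Main.v *)
Require Import Defs.
From HB Require Import structures.
From mathcomp Require Import all_boot all_order all_algebra.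
From mathcomp Require Import all_classical all_reals all_analysis.
From mathcomp Require Import ring lra.
Import Order.TTheory GRing.Theory Num.Theory.
Import numFieldNormedType.Exports.
Local Open Scope classical_set_scope.
Local Open Scope ring_scope.
Lemma pair_key {R : realType} (A B C D a : R) :
  0 < A -> 0 <= B -> 0 < C -> 0 <= D -> A * C > B * D ->
  let S := A + B + C + D in let mu := (C + D) / S in
  mu * (a - A) + (1 - mu) * (a + D) < a /\ mu * (a + B) + (1 - mu) * (a - C) < a.
Proof.
move=> A0 B0 C0 D0 H S mu.
have S0 : 0 < S by rewrite /S; lra.
have hmu : mu * S = C + D by rewrite /mu mulrAC -mulrA divff ?mulr1 // gt_eqF.
have h1 : (1 - mu) * S = A + B by rewrite mulrBl mul1r hmu /S; lra.
split.
- have : (mu * (a - A) + (1 - mu) * (a + D) - a) * S = B * D - A * C.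
    have -> : mu * (a - A) + (1 - mu) * (a + D) - a = mu * (- A) + (1 - mu) * D.
      by ring.
    by rewrite mulrDl -mulrA (mulrC (-A)) mulrA hmu -mulrA (mulrC D) mulrA h1; ring.
  move=> E; rewrite -subr_lt0 -(pmulr_llt0 _ S0) E; lra.
- have : (mu * (a + B) + (1 - mu) * (a - C) - a) * S = B * D - A * C.
    have -> : mu * (a + B) + (1 - mu) * (a - C) - a = mu * B + (1 - mu) * (- C).
      by ring.
    by rewrite mulrDl -mulrA (mulrC B) mulrA hmu -mulrA (mulrC (-C)) mulrA h1; ring.
  move=> E; rewrite -subr_lt0 -(pmulr_llt0 _ S0) E; lra.
Qed.
Definition convex_set {R : realType} {X : lmodType R} (C : set X) :=
  forall x y (t : R), C x -> C y -> 0 < t < 1 -> C (t *: x + (1 - t) *: y).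
Definition convex_on {R : realType} {X : lmodType R} (C : set X) (u : X -> R) :=
  forall x y (t : R), C x -> C y -> 0 < t < 1 ->
    u (t *: x + (1 - t) *: y) <= t * u x + (1 - t) * u y.

Lemma two_fun (R : realType) (X : lmodType R) (C : set X) (u v : X -> R) (a : R) :
  convex_set C -> convex_on C u -> convex_on C v ->
  (forall x, C x -> a <= Num.max (u x) (v x)) ->
  exists t, 0 <= t <= 1 /\ forall x, C x -> a <= t * u x + (1 - t) * v x.
Proof.
move=> cC cu cv hmax.
have key : forall x y, C x -> C y -> u x < a -> v y < a ->
    (a - v y) / ((u y - a) + (a - v y)) <= (v x - a) / ((a - u x) + (v x - a)).
  move=> x y Cx Cy uxa vya.
  have vx : a <= v x.
    by have := hmax x Cx; rewrite le_max leNgt uxa /=.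
  have uy : a <= u y.
    by have := hmax y Cy; rewrite le_max (leNgt a (v y)) vya orbF.
  rewrite ler_pdivrMr; last lra.
  rewrite mulrAC ler_pdivlMr; last lra.
  rewrite leNgt; apply/negP => H.
  have H' : (a - u x) * (a - v y) > (v x - a) * (u y - a) by nra.
  have [] := pair_key (a - u x) (v x - a) (a - v y) (u y - a) a
    ltac:(lra) ltac:(lra) ltac:(lra) ltac:(lra) H'.
  set S := _ + _ + _ + _; set mu := (_ / S) => h1 h2.
  have S0 : 0 < S by rewrite /S; lra.
  have mu01 : 0 < mu < 1.
    rewrite /mu ltr_pdivlMr // ltr_pdivrMr // mul0r mul1r /S; apply/andP; split; lra.
  have Cz := cC x y mu Cx Cy mu01.
  have := hmax _ Cz; rewrite le_max => /orP[|].
  - move=> /le_trans/(_ (cu x y mu Cx Cy mu01)) hz.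
    have E1 : a - (a - u x) = u x by ring.
    have E2 : a + (u y - a) = u y by ring.
    by move: h1; rewrite E1 E2 => h1; lra.
  - move=> /le_trans/(_ (cv x y mu Cx Cy mu01)) hz.
    have E1 : a + (v x - a) = v x by ring.
    have E2 : a - (a - v y) = v y by ring.
    by move: h2; rewrite E1 E2 => h2; lra.
pose Sset := [set s | exists y, [/\ C y, v y < a & s = (a - v y) / ((u y - a) + (a - v y))]].
have Sub : forall s, Sset s -> 0 < s <= 1.
  move=> _ [y [Cy vya ->]].
  have uy : a <= u y.
    by have := hmax y Cy; rewrite le_max (leNgt a (v y)) vya orbF.
  rewrite divr_gt0 /=; try lra.
  by rewrite ler_pdivrMr; lra.
have hs : has_sup Sset -> forall s, Sset s -> s <= sup Sset.
  by move=> hS s Ss; apply: sup_upper_bound.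
exists (sup Sset).
have [Sne|S0] := pselect (Sset !=set0); last first.
  have -> : Sset = set0 by apply/eqP/negPn/negP => /set0P.
  rewrite sup0; split; first by rewrite lexx ler01.
  move=> x Cx; rewrite mul0r add0r subr0 mul1r.
  have := hmax x Cx; rewrite le_max => /orP[|//] aux.
  rewrite leNgt; apply/negP => vxa; apply: S0.
  by exists ((a - v x) / ((u x - a) + (a - v x))); exists x.
have hS : has_sup Sset by split; [exact: Sne|exists 1] => s /Sub; lra.
have sup01 : 0 <= sup Sset <= 1.
  case: (Sne) => s Ss; have := hs hS s Ss; have := Sub s Ss.
  have : sup Sset <= 1 by apply: ge_sup => // r /Sub; lra.
  lra.
split => // x Cx.
have [uxa|axu] := ltP (u x) a.
  have vx : a <= v x.
    by have := hmax x Cx; rewrite le_max leNgt uxa /=.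
  have : sup Sset <= (v x - a) / ((a - u x) + (v x - a)).
    apply: ge_sup => // _ [y [Cy vya ->]]; exact: key.
  rewrite ler_pdivlMr; last lra.
  move=> h; nra.
have [vxa|axv] := ltP (v x) a.
  have : (a - v x) / ((u x - a) + (a - v x)) <= sup Sset.
    by apply: hs => //; exists x.
  rewrite ler_pdivrMr; last lra.
  move=> h; nra.
nra.
Qed.
Lemma convex_onD {R : realType} {X : lmodType R} (C : set X) (u v : X -> R) :
  convex_on C u -> convex_on C v -> convex_on C (fun x => u x + v x).
Proof.
move=> cu cv x y t Cx Cy t01.
have := cu x y t Cx Cy t01; have := cv x y t Cx Cy t01; lra.
Qed.

Lemma convex_onZ {R : realType} {X : lmodType R} (C : set X) (u : X -> R) (c : R) :
  0 <= c -> convex_on C u -> convex_on C (fun x => c * u x).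
Proof.
move=> c0 cu x y t Cx Cy t01.
have := cu x y t Cx Cy t01 => h.
have -> : t * (c * u x) + (1 - t) * (c * u y) = c * (t * u x + (1 - t) * u y) by ring.
by apply: ler_wpM2l.
Qed.

Lemma construct {R : realType} {X : lmodType R} (C : set X) (phi gam : nat -> X -> R) (a : R) :
  convex_set C -> (forall k, convex_on C (phi k)) -> (forall n, convex_on C (gam n)) ->
  (forall n x, C x -> gam n x <= Num.max (phi n x) (gam n.+1 x)) ->
  (forall x, C x -> a <= gam 0%N x) ->
  exists (lam m : nat -> R), [/\ forall n, 0 <= lam n, forall n, 0 <= m n,
     forall n, m n.+1 <= m n,
     forall n, \sum_(0 <= k < n) lam k + m n = 1 &
     forall n x, C x -> a <= \sum_(0 <= k < n) lam k * phi k x + m n * gam n x].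
Proof.
move=> cC cphi cgam hmax h0.
pose tsel (n : nat) (P : X -> R) (m : R) : R := xget 0 [set t : R | 0 <= t <= 1 /\
  forall x, C x -> a <= t * (P x + m * phi n x) + (1 - t) * (P x + m * gam n.+1 x)].
pose st := fix st (n : nat) : (X -> R) * R := match n with
  | 0%N => (fun _ => 0, 1)
  | n'.+1 => let t := tsel n' (st n').1 (st n').2 in
      (fun x => (st n').1 x + (st n').2 * t * phi n' x, (st n').2 * (1 - t)) end.
pose lam n := (st n).2 * tsel n (st n).1 (st n).2.
have inv : forall n, [/\ forall x, (st n).1 x = \sum_(0 <= k < n) lam k * phi k x,
    0 <= (st n).2, \sum_(0 <= k < n) lam k + (st n).2 = 1, convex_on C (st n).1 &
    (forall x, C x -> a <= (st n).1 x + (st n).2 * gam n x) /\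
    (forall k, (k < n)%N -> 0 <= lam k)].
  elim=> [|n [IH1 IH2 IH3 IH4 [IH5 IH6]]].
    split => //=.
    - by move=> x; rewrite big_nil.
    - by rewrite big_nil add0r.
    - by move=> x y t _ _ _; rewrite !mulr0 addr0.
    - by split => // x Cx; rewrite add0r mul1r; apply: h0.
  have ex : exists t, 0 <= t <= 1 /\ forall x, C x ->
      a <= t * ((st n).1 x + (st n).2 * phi n x) + (1 - t) * ((st n).1 x + (st n).2 * gam n.+1 x).
    apply: two_fun => //.
    - by apply: convex_onD => //; apply: convex_onZ.
    - by apply: convex_onD => //; apply: convex_onZ.
    - move=> x Cx; have := IH5 x Cx; have := hmax n x Cx.
      rewrite !le_max => /orP[] h1 h2; apply/orP; [left|right]; nra.
  have := xgetPex 0 ex; rewrite -/(tsel n (st n).1 (st n).2).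
  set t := tsel n _ _ => -[t01 ht].
  have lamn : lam n = (st n).2 * t by [].
  split => /=.
  - by move=> x; rewrite big_nat_recr //= IH1 -/t lamn.
  - rewrite -/t; apply: mulr_ge0 => //; lra.
  - by rewrite big_nat_recr //= -/t lamn; move: IH3; lra.
  - rewrite -/t; apply: convex_onD => //; rewrite -/t.
    by apply: convex_onZ => //; apply: mulr_ge0 => //; lra.
  - split; last first.
      move=> k; rewrite ltnS leq_eqVlt => /orP[/eqP ->|/IH6//].
      by rewrite lamn; apply: mulr_ge0 => //; lra.
    move=> x Cx; rewrite -/t; have := ht x Cx; set P := (st n).1 x.
    have -> : t * (P + (st n).2 * phi n x) + (1 - t) * (P + (st n).2 * gam n.+1 x)
      = P + (st n).2 * t * phi n x + (st n).2 * (1 - t) * gam n.+1 x by ring.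
    by [].
exists lam, (fun n => (st n).2); split.
- by move=> n; have [_ _ _ _ [_ h]] := inv n.+1; apply: h.
- by move=> n; have [] := inv n.
- move=> n; have [_ _ h1 _ _] := inv n; have [_ _ h2 _ [_ h3]] := inv n.+1.
  move: h2; rewrite big_nat_recr //=; move: h1.
  have := h3 n (ltnSn n).
  lra.
- by move=> n; have [] := inv n.
- move=> n x Cx; have [h1 _ _ _ [h5 _]] := inv n; rewrite -h1; exact: h5.
Qed.
Lemma cvg_aux (R : realType) (m : nat -> R) (linf c M : R) :
  m @ \oo --> linf -> (fun n => c - (m n - linf) * M) @ \oo --> c.
Proof.
move=> hm.
have h1 : (fun n => m n - linf) @ \oo --> linf - linf.
  by apply: cvgB => //; exact: cvg_cst.
rewrite subrr in h1.
have h2 : (fun n => (m n - linf) * M) @ \oo --> 0 * M by apply: cvgMr_tmp.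
rewrite mul0r in h2.
have h3 : (fun n => c - (m n - linf) * M) @ \oo --> c - 0.
  by apply: cvgB => //; exact: cvg_cst.
by rewrite subr0 in h3.
Qed.
Local Open Scope ereal_scope.

Lemma cadd_ge {R : realType} (a b : \bar R) : a + b <= Defs.cadd a b.
Proof. by rewrite /Defs.cadd; case: ifP => // _; rewrite leey. Qed.

Lemma cmul_ge {R : realType} (l : R) (a : \bar R) : l%:E * a <= Defs.cmul l a.
Proof. by rewrite /Defs.cmul; case: ifP => // _; rewrite leey. Qed.

Lemma cadd_eq {R : realType} (a b : \bar R) : a != +oo -> b != +oo -> Defs.cadd a b = a + b.
Proof. by rewrite /Defs.cadd => /negbTE -> /negbTE ->. Qed.

Lemma cadd_yl {R : realType} (b : \bar R) : Defs.cadd +oo b = +oo.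
Proof. by []. Qed.

Lemma cadd_yr {R : realType} (a : \bar R) : Defs.cadd a +oo = +oo.
Proof. by rewrite /Defs.cadd orbT. Qed.

Lemma cmul_fin {R : realType} (l r : R) : Defs.cmul l r%:E = (l * r)%:E.
Proof. by []. Qed.

Lemma le_limn_esup_near {R : realType} (u v : (\bar R)^nat) (N : nat) :
  (forall n, (N <= n)%N -> u n <= v n) -> limn_esup u <= limn_esup v.
Proof.
move=> uv; rewrite !limn_esup_lim; apply: lee_lim.
all: try exact: is_cvg_esups.
near=> n; apply: ge_ereal_sup => _ [k /= nk <-].
apply: (le_trans (uv k _)); last by apply: ereal_sup_ubound; exists k.
by apply: leq_trans nk; near: n; exists N.
Unshelve. all: by end_near. Qed.

Lemma limn_esup_real {R : realType} (b : R^nat) (l : R) :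
  b @ \oo --> l -> limn_esup (fun n => (b n)%:E) = l%:E.
Proof.
move=> bl; have h : (fun n => (b n)%:E) @ \oo --> l%:E.
  by apply: cvg_EFin => //; apply: nearW.
by have [_ ->] := cvg_limn_einf_sup h.
Qed.

Lemma limn_esup_cst {R : realType} (c : \bar R) : limn_esup (fun _ : nat => c) = c.
Proof.
have h : (fun _ : nat => c) @ \oo --> c by apply: cvg_cst.
by have [_ ->] := cvg_limn_einf_sup h.
Qed.
Lemma esups0 {R : realType} (u : (\bar R)^nat) : esups u 0%N = ereal_sup (range u).
Proof.
rewrite /esups /=; congr ereal_sup; apply/seteqP; split => _ [k _ <-]; by exists k.
Qed.

Lemma esupsS {R : realType} (u : (\bar R)^nat) n : esups u n = maxe (u n) (esups u n.+1).
Proof.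
apply/eqP; rewrite eq_le; apply/andP; split.
  apply: ge_ereal_sup => _ [k /= nk <-].
  move: nk; rewrite leq_eqVlt => /orP[/eqP ->|nk]; first by rewrite le_max lexx.
  by rewrite le_max; apply/orP; right; apply: ereal_sup_ubound; exists k.
rewrite ge_max; apply/andP; split; first by apply: ereal_sup_ubound; exists n => /=.
by apply: ge_ereal_sup => _ [k /= nk <-]; apply: ereal_sup_ubound; exists k => //=; apply: ltnW.
Qed.

Lemma upper {R : realType} {X : Type} (f : nat -> X -> \bar R) (l : nat -> R) (linf : R) (x : X) :
  (forall k, f k x != -oo) -> admissible l linf ->
  weighted_value f l linf x <= ereal_sup (range (fun k => f k x)).
Proof.
move=> fN [l0 [cl [linf0 hsum]]].
set F := ereal_sup _.
have [Fy|Fny] := eqVneq F +oo; first by rewrite Fy leey.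
have fk k : f k x <= F by apply: ereal_sup_ubound; exists k.
have ffin k : f k x \is a fin_num.
  by rewrite fin_numE fN /= -ltey (le_lt_trans (fk k)) // ltey.
have Ffin : F \is a fin_num.
  rewrite fin_numE Fny andbT; apply: contra (fN 0%N) => /eqP F0.
  by have := fk 0%N; rewrite F0 leeNy_eq.
set M := fine F.
have FM : F = M%:E by rewrite fineK.
have hS : forall n, \sum_(0 <= k < n) Defs.cmul (l k) (f k x) =
    (\sum_(0 <= k < n) (l k * fine (f k x)))%R%:E.
  move=> n; rewrite -sumEFin; apply: eq_bigr => k _.
  by rewrite -{1}(fineK (ffin k)).
have L1 : limn_esup (fun n => \sum_(0 <= k < n) Defs.cmul (l k) (f k x))
    <= (limn (series l) * M)%:E.
  under eq_fun do rewrite hS.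
  rewrite -(@limn_esup_real _ (fun n => series l n * M)%R (limn (series l) * M)%R); last first.
    by apply: cvgMr_tmp.
  eapply (@le_limn_esup_near R _ _ 0%N) => n _; rewrite lee_fin /series /= mulr_suml.
  apply: ler_sum => k _; apply: ler_wpM2l => //.
  by rewrite -lee_fin fineK // -FM.
have L2 : limn_esup (fun k => f k x) <= F.
  by rewrite -[leRHS]limn_esup_cst; apply: (@le_limn_esup_near R _ _ 0%N) => n _.
have hfi : limn_esup (fun k => f k x) != +oo.
  by rewrite -ltey (le_lt_trans L2) // FM ltey.
have L3 : linf%:E * limn_esup (fun k => f k x) <= (linf * M)%:E.
  by rewrite EFinM; apply: lee_wpmul2l; [rewrite lee_fin|rewrite -FM].
rewrite /weighted_value /Defs.cmul (negbTE hfi) cadd_eq; last 2 first.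
- by rewrite -ltey (le_lt_trans L1) // ltey.
- by rewrite -ltey (le_lt_trans L3) // ltey.
apply: le_trans (leeD L1 L3) _.
by rewrite FM -EFinD lee_fin -mulrDl hsum mul1r.
Qed.
Lemma sum_neqNy {R : realType} (s : seq nat) (F : nat -> \bar R) :
  (forall i, F i != -oo) -> \sum_(i <- s) F i != -oo.
Proof.
move=> hF; elim: s => [|i s IH]; first by rewrite big_nil.
by rewrite big_cons adde_eq_ninfty negb_or hF.
Qed.

Lemma cmul_neqNy {R : realType} (l : R) (a : \bar R) : a != -oo -> Defs.cmul l a != -oo.
Proof. by rewrite /Defs.cmul; case: a => [r| |] //=. Qed.

Lemma lower {R : realType} {X : Type} (f : nat -> X -> \bar R) (lam m : nat -> R) (a linf : R) (x : X) :
  (forall k, f k x != -oo) -> (forall n, 0 <= lam n)%R -> m @ \oo --> linf ->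
  (forall n, linf <= m n)%R -> (0 <= linf)%R ->
  (ereal_sup (range (fun k => f k x)) != +oo -> forall n,
     (a <= \sum_(0 <= k < n) lam k * fine (f k x) + m n * fine (esups (fun k => f k x) n))%R) ->
  a%:E <= weighted_value f lam linf x.
Proof.
move=> fN lam0 mcv mge linf0 hyp.
rewrite /weighted_value.
have [[k fky]|nofy] := pselect (exists k, f k x = +oo).
  suff -> : limn_esup (fun n => \sum_(0 <= k < n) Defs.cmul (lam k) (f k x)) = +oo.
    by rewrite cadd_yl leey.
  apply/eqP; rewrite eq_le leey /= -[X in X <= _](@limn_esup_cst R +oo).
  apply: (@le_limn_esup_near R _ _ k.+1) => n kn.
  rewrite (big_cat_nat (leq0n k) (ltnW kn)) /= (big_ltn kn) {2}/Defs.cmul fky /=.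
  rewrite addye ?addey //; apply: sum_neqNy => i; exact: cmul_neqNy.
have ffin k : f k x \is a fin_num.
  by rewrite fin_numE fN /=; apply/eqP => h; apply: nofy; exists k.
set u := fun k => f k x.
have [Fy|Fny] := eqVneq (ereal_sup (range u)) +oo.
  have Ey : forall N, esups u N = +oo.
    elim=> [|N IH]; first by rewrite esups0.
    move: IH; rewrite esupsS /Order.max; case: ifP => // _ h.
    by move: (ffin N); rewrite fin_numE /u -/(u N) h andbF.
  have -> : limn_esup u = +oo.
    rewrite limn_esup_lim (_ : esups u = fun _ => +oo); first by rewrite lim_cst.
    by apply/funext => N; rewrite Ey.
  by rewrite /Defs.cmul eqxx cadd_yr leey.
have H := hyp Fny.
set F := ereal_sup (range u).
have uF k : u k <= F by apply: ereal_sup_ubound; exists k.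
have esF n : esups u n <= F by rewrite /F -esups0; apply: nonincreasing_esups.
have esfin n : esups u n \is a fin_num.
  rewrite fin_numE; apply/andP; split.
    apply: contra (fN n) => /eqP h.
    have : u n <= esups u n by apply: ereal_sup_ubound; exists n => /=.
    by rewrite h leeNy_eq.
  by rewrite -ltey (le_lt_trans (esF n)) // ltey.
have Ffin : F \is a fin_num by rewrite /F -esups0.
set G := fun n => fine (esups u n).
have GE n : esups u n = (G n)%:E by rewrite fineK.
have Gmono N n : (N <= n)%N -> (G n <= G N)%R.
  by move=> Nn; rewrite -lee_fin -!GE; apply: nonincreasing_esups.
set M := fine F.
have GM n : (G n <= M)%R by rewrite -lee_fin -GE fineK.
set S := fun n => (\sum_(0 <= k < n) lam k * fine (u k))%R.
have PS : (fun n => \sum_(0 <= k < n) Defs.cmul (lam k) (f k x)) = fun n => (S n)%:E.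
  apply/funext => n; rewrite /S -sumEFin; apply: eq_bigr => k _.
  by rewrite -{1}(fineK (ffin k)).
rewrite PS.
set L := limn_esup (fun n => (S n)%:E).
have LB : forall N, ((a - linf * G N)%:E <= L).
  move=> N; rewrite -(@limn_esup_real R (fun n => a - linf * G N - (m n - linf) * `|M|)%R).
    apply: (@le_limn_esup_near R _ _ N) => n Nn; rewrite lee_fin.
    have := H n; rewrite -/(u n) => hn.
    have h1 : (linf * G n <= linf * G N)%R by apply: ler_wpM2l => //; apply: Gmono.
    have h2 : ((m n - linf) * G n <= (m n - linf) * `|M|)%R.
      apply: ler_wpM2l; first by have := mge n; lra.
      exact: le_trans (GM n) (ler_norm M).
    have h3 : ((m n - linf) * G n = m n * G n - linf * G n)%R by ring.
    rewrite /S; move: hn; rewrite /G; move: h1 h2 h3; rewrite /G; lra.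
  exact: cvg_aux.
have [Ly|Lny] := eqVneq L +oo; first by rewrite Ly cadd_yl leey.
have Lfin : L \is a fin_num.
  rewrite fin_numE Lny andbT; apply/negP => /eqP h.
  by have := LB 0%N; rewrite h leeNy_eq.
set l := fine L.
have LE : L = l%:E by rewrite fineK.
apply: (le_trans _ (cadd_ge _ _)); apply: (le_trans _ (leeD2l _ (cmul_ge _ _))).
rewrite LE.
have [lin0|linfp] := eqVneq linf 0%R.
  by rewrite lin0 mul0e adde0; have := LB 0%N; rewrite LE lin0 mul0r subr0.
have linf_pos : (0 < linf)%R by rewrite lt_neqAle eq_sym linfp linf0.
have finf : ((a - l) / linf)%:E <= limn_esup u.
  rewrite limn_esup_lim; apply: lime_ge; first exact: is_cvg_esups.
  apply: nearW => N; rewrite GE lee_fin ler_pdivrMr //.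
  have := LB N; rewrite LE lee_fin mulrC; lra.
have := lee_wpmul2l (x := linf%:E) _ finf.
rewrite -EFinM (_ : (linf * ((a - l) / linf) = a - l)%R); last first.
  by rewrite mulrC divfK // gt_eqF.
move=> /(_ ltac:(by rewrite lee_fin)) h.
apply: le_trans (leeD2l _ h); by rewrite -EFinD addrC subrK.
Qed.
Lemma fin_facts {R : realType} {X : Type} (f : nat -> X -> \bar R) (x : X) :
  (forall k, f k x != -oo) -> ereal_sup (range (fun k => f k x)) != +oo ->
  [/\ forall k, f k x \is a fin_num, ereal_sup (range (fun k => f k x)) \is a fin_num &
      forall n, esups (fun k => f k x) n \is a fin_num].
Proof.
move=> fN Fny; set u := fun k => f k x.
have uF k : u k <= ereal_sup (range u) by apply: ereal_sup_ubound; exists k.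
have esF n : esups u n <= ereal_sup (range u) by rewrite -esups0; apply: nonincreasing_esups.
have ffin k : u k \is a fin_num.
  by rewrite fin_numE fN /= -ltey (le_lt_trans (uF k)) // ltey.
have esfin n : esups u n \is a fin_num.
  rewrite fin_numE; apply/andP; split.
    apply: contra (fN n) => /eqP h.
    have : u n <= esups u n by apply: ereal_sup_ubound; exists n => /=.
    by rewrite h leeNy_eq.
  by rewrite -ltey (le_lt_trans (esF n)) // ltey.
split => //; by rewrite -esups0.
Qed.

Lemma sup_convex {R : realType} {X : lmodType R} (f : nat -> X -> \bar R) (K : set nat)
  (x y : X) (t : R) :
  (forall k, convex_fun (f k)) -> (0 < t < 1)%R ->
  ereal_sup [set f k (t *: x + (1 - t) *: y)%R | k in K] <=
  t%:E * ereal_sup [set f k x | k in K] + (1 - t)%:E * ereal_sup [set f k y | k in K].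
Proof.
move=> fc t01; apply: ge_ereal_sup => _ [k Kk <-].
apply: le_trans (fc k x y t t01) _.
have t0 : (0 <= t)%R by case/andP: t01 => /ltW.
have t1 : (0 <= 1 - t)%R by case/andP: t01 => _ h; rewrite subr_ge0 ltW.
apply: leeD; apply: lee_wpmul2l; rewrite ?lee_fin //;
  by apply: ereal_sup_ubound; exists k.
Qed.
Theorem proposition3p2 (R : realType) (X : completeNormedModType R)
  (f : nat -> X -> \bar R) :
  (forall k, proper_fun (f k)) ->
  (forall k, convex_fun (f k)) ->
  proper_fun (fun x => ereal_sup (range (fun k => f k x))) ->
  exists (l : nat -> R) (linf : R),
    [/\ admissible l linf,
        ereal_inf (range (weighted_value f l linf))
          = ereal_inf (range (fun x => ereal_sup (range (fun k => f k x))))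
      & forall (l' : nat -> R) (linf' : R), admissible l' linf' ->
          ereal_inf (range (weighted_value f l' linf'))
            <= ereal_inf (range (fun x => ereal_sup (range (fun k => f k x))))].
Proof.
move=> fprop fconv [_ [x0 Fx0]].
have fN k x : f k x != -oo by have [h _] := fprop k; exact: h.
set F := fun x => ereal_sup (range (fun k => f k x)).
set alpha := ereal_inf (range F).
have weak : forall l' linf', admissible l' linf' ->
    ereal_inf (range (weighted_value f l' linf')) <= alpha.
  move=> l' linf' ad; apply: le_ereal_inf_tmp => _ [x _ <-].
  rewrite /F; apply: le_trans (upper f l' linf' x (fun k => fN k x) ad).
  by apply: ereal_inf_lbound; exists x.
suff [l [linf [ad ge]]] : exists l linf, admissible l linf /\
    alpha <= ereal_inf (range (weighted_value f l linf)).
  exists l, linf; split => //; apply/eqP; rewrite eq_le weak //=.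
have alpha_ny : alpha != +oo.
  have h : alpha <= F x0 by apply: ereal_inf_lbound; exists x0.
  by rewrite -ltey (le_lt_trans h) // ltey.
have [aNy|aNny] := eqVneq alpha -oo.
  have se : series (fun _ : nat => 0%R) = (fun _ => 0%R :> R).
    by apply/funext => n; rewrite /series /= big1.
  exists (fun _ => 0%R), 1%R; split; last by rewrite aNy leNye.
  split; first by move=> k.
  split; first by rewrite se; apply: is_cvg_cst.
  split; first by rewrite ler01.
  by rewrite se lim_cst // add0r.
set a := fine alpha.
have aE : alpha = a%:E by rewrite fineK // fin_numE aNny alpha_ny.
pose C := [set x | F x != +oo].
pose phi k x := fine (f k x).
pose gam n x := fine (esups (fun k => f k x) n).
have cC : convex_set C.
  move=> x y t Cx Cy t01; rewrite /C /=.
  have := sup_convex f setT x y t fconv t01.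
  have [_ Fx _] := fin_facts f x (fun k => fN k x) Cx.
  have [_ Fy _] := fin_facts f y (fun k => fN k y) Cy.
  move=> h; rewrite -ltey; apply: le_lt_trans h _.
  by rewrite -(fineK Fx) -(fineK Fy) -!EFinM -EFinD ltey.
have cphi k : convex_on C (phi k).
  move=> x y t Cx Cy t01; have Cz := cC x y t Cx Cy t01.
  have [fx _ _] := fin_facts f x (fun k => fN k x) Cx.
  have [fy _ _] := fin_facts f y (fun k => fN k y) Cy.
  have [fz _ _] := fin_facts f _ (fun k => fN k _) Cz.
  rewrite -lee_fin EFinD !EFinM /phi !fineK //; exact: fconv.
have cgam n : convex_on C (gam n).
  move=> x y t Cx Cy t01; have Cz := cC x y t Cx Cy t01.
  have [_ _ fx] := fin_facts f x (fun k => fN k x) Cx.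
  have [_ _ fy] := fin_facts f y (fun k => fN k y) Cy.
  have [_ _ fz] := fin_facts f _ (fun k => fN k _) Cz.
  rewrite -lee_fin EFinD !EFinM /gam !fineK //.
  exact: (sup_convex f [set k | (n <= k)%N] x y t fconv t01).
have hmax n x : C x -> (gam n x <= Num.max (phi n x) (gam n.+1 x))%R.
  move=> Cx; have [h1 _ h3] := fin_facts f x (fun k => fN k x) Cx.
  rewrite -lee_fin EFin_max /gam /phi (fineK (h1 n)) (fineK (h3 n)) (fineK (h3 n.+1)).
  by rewrite [X in X <= _]esupsS.
have h0 x : C x -> (a <= gam 0%N x)%R.
  move=> Cx; have [_ _ h3] := fin_facts f x (fun k => fN k x) Cx.
  rewrite -lee_fin /gam (fineK (h3 0%N)) -aE esups0.
  by apply: ereal_inf_lbound; exists x.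
have [lam [m [lam0 m0 mdec msum minv]]] := @construct R _ C phi gam a cC cphi cgam hmax h0.
have mni : nonincreasing_seq m by apply/nonincreasing_seqP.
have mcvg : cvgn m.
  apply/cvg_ex; eexists; apply: (nonincreasing_cvgn mni).
  by exists 0%R => _ [n _ <-]; exact: m0.
set linf := limn m.
have mc : m @ \oo --> linf by [].
have mge n : (linf <= m n)%R := nonincreasing_cvgn_ge mni mcvg n.
have linf0 : (0 <= linf)%R.
  by apply: (cvgr_to_ge mc); apply: nearW => n; exact: m0.
have sc : series lam @ \oo --> (1 - linf)%R.
  have -> : series lam = (fun n => 1 - m n)%R.
    by apply/funext => n; rewrite /series /= -(msum n) addrK.
  by apply: cvgB => //; exact: cvg_cst.
exists lam, linf; split.
  split => //; split; first by apply/cvg_ex; exists (1 - linf)%R.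
  by split => //; rewrite (cvg_lim _ sc) // subrK.
rewrite aE; apply: le_ereal_inf_tmp => _ [x _ <-].
apply: (lower f lam m a linf x (fun k => fN k x) lam0 mc mge linf0).
by move=> Cx n; exact: minv n x Cx.
Qed.
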